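(* Let $R\in\{\mathrm{ML},\mathrm{wML},\mathrm{C},\mathrm{S}\}$ and let $[p,q]\in\mathscr I$ with $p<q$. Then there is a precise forecasting system $\varphi$ with $\varphi(s)\subseteq[p,q]$ for all $s\in\mathbb S$ such that any path $\omega\in\Omega$ is $R$-random for $\varphi$ if and only if it is $R$-random for $[p,q]$.
   Context: Notation: $\mathbb N=\{1,2,\dots\}$, $\mathbb N_0=\mathbb N\cup\{0\}$. $\Omega=\{0,1\}^{\mathbb N}$ is the set of paths $\omega=(\omega_1,\omega_2,\dots)$; $\omega_{1:n}=(\omega_1,\dots,\omega_n)$, $\omega_{1:0}=\square$ (empty sequence). $\mathbb S=\bigcup_{n\in\mathbb N_0}\{0,1\}^n$ is the set of situations, $|s|$ the length, $sx$ concatenation. $\mathscr I$ is the set of closed intervals $I\subseteq[0,1]$ (singletons identified with numbers). For $r\in[0,1]$ and $f:\{0,1\}\to\mathbb R$, $E_r(f)=rf(1)+(1-r)f(0)$; for $I\in\mathscr I$, $\overline E_I(f)=\max_{r\in I}E_r(f)$. A forecasting system is a map $\varphi:\mathbb S\to\mathscr I$; it is precise if every $\varphi(s)$ is a singleton; a stationary (constant) forecasting system with value $I$ is identified with $I$. A real process is $F:\mathbb S\to\mathbb R$; $\Delta F(s)$ is the function $x\mapsto F(sx)-F(s)$. $M$ is a supermartingale for $\varphi$ if $\overline E_{\varphi(s)}(\Delta M(s))\le0$ for all $s$. A test process is a non-negative real process with $F(\square)=1$; a test supermartingale for $\varphi$ is a test process that is a supermartingale for $\varphi$. A multiplier process $D$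 assigns to each $s$ a function $D(s):\{0,1\}\to[0,\infty)$ and generates the test process $F(\square)=1$, $F(sx)=F(s)D(s)(x)$. Computability: maps from countable effectively encoded domains to $\mathbb N_0$ or $\mathbb Q$ are recursive if Turing-computable; a real map $r$ on such a domain $\mathscr D$ is lower semicomputable if $r(d)=\lim_n q(d,n)$ for a recursive rational $q$ non-decreasing in $n$, and computable if $|r(d)-q(d,n)|<2^{-n}$ for some recursive rational $q$. $\mathscr F_{\mathrm{ML}}$: lower semicomputable test processes; $\mathscr F_{\mathrm{wML}}$: test processes generated by lower semicomputable multiplier processes; $\mathscr F_{\mathrm C}=\mathscr F_{\mathrm S}$: positive rational-valued recursive test processes. $\overline{\mathbb T}_R(\varphi)$ is the set of elements of $\mathscr F_R$ that are test supermartingales for $\varphi$. For $R\in\{\mathrm{ML},\mathrm{wML},\mathrm C\}$, $\omega$ is $R$-random for $\varphi$ if no $T\in\overline{\mathbb T}_R(\varphi)$ has $\limsup_nT(\omega_{1:n})=\infty$. A real growth function is a computable, non-decreasing, unbounded $\tau:\mathbb N_0\to[0,\infty)$; $\omega$ is S-random for $\varphi$ if there are no $T\in\overline{\mathbb T}_{\mathrm S}(\varphi)$ and real growth function $\tau$ with $\limsup_n[T(\omega_{1:n})-\tau(n)]\ge0$. $R$-random for an interval $I$ means $R$-random for the stationary forecasting system with value $I$. *)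

(* Defs.v *)
From Stdlib Require Import Reals List Lra Arith.
Import ListNotations.

Inductive rec : Type :=
| RZero
| RSucc
| RProj (i : nat)
| RComp (f : rec) (gs : list rec)
| RPrimRec (f g : rec)
| RMu (f : rec).

Inductive eval : rec -> list nat -> nat -> Prop :=
| ev_zero xs : eval RZero xs 0
| ev_succ x xs : eval RSucc (x :: xs) (S x)
| ev_proj i xs : eval (RProj i) xs (nth i xs 0)
| ev_comp f gs xs ys y : evals gs xs ys -> eval f ys y -> eval (RComp f gs) xs y
| ev_pr0 f g xs y : eval f xs y -> eval (RPrimRec f g) (0 :: xs) y
| ev_prS f g n xs z y :
    eval (RPrimRec f g) (n :: xs) z -> eval g (n :: z :: xs) y ->
    eval (RPrimRec f g) (S n :: xs) y
| ev_mu f xs y :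
    eval f (y :: xs) 0 ->
    (forall k, (k < y)%nat -> exists m, m <> 0 /\ eval f (k :: xs) m) ->
    eval (RMu f) xs y
with evals : list rec -> list nat -> list nat -> Prop :=
| evs_nil xs : evals nil xs nil
| evs_cons g gs xs y ys : eval g xs y -> evals gs xs ys -> evals (g :: gs) xs (y :: ys).

Definition situation := list bool.

(* effective (injective, computable) encoding of situations into nat *)
Fixpoint code (s : situation) : nat :=
  match s with
  | nil => 0
  | b :: t => 2 * code t + (if b then 2 else 1)
  end.

Definition enc_sit (s : situation) : list nat := [code s].
Definition enc_sitx (p : situation * bool) : list nat :=
  [code (fst p); if snd p then 1 else 0].
Definition enc_nat (n : nat) : list nat := [n].

Definition prefix (omega : nat -> bool) (n : nat) : situation := map omega (seq 0 n).

Open Scope R_scope.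

(* A rational-valued map on an effectively encoded domain is recursive:
   value (a - b)/(c + 1) with a, b, c computed by total recursive programs. *)
Definition rec_rat {D : Type} (enc : D -> list nat) (r : D -> R) : Prop :=
  exists ca cb cc : rec, forall d, exists a b c : nat,
    eval ca (enc d) a /\ eval cb (enc d) b /\ eval cc (enc d) c /\
    r d = (INR a - INR b) / (INR c + 1).

Definition enc_pair {D : Type} (enc : D -> list nat) (dn : D * nat) : list nat :=
  enc (fst dn) ++ [snd dn].

Definition lower_semicomputable {D : Type} (enc : D -> list nat) (r : D -> R) : Prop :=
  exists q : D -> nat -> R,
    rec_rat (enc_pair enc) (fun dn => q (fst dn) (snd dn)) /\
    (forall d n, q d n <= q d (S n)) /\
    (forall d, Un_cv (q d) (r d)).

Definition computable_real {D : Type} (enc : D -> list nat) (r : D -> R) : Prop :=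
  exists q : D -> nat -> R,
    rec_rat (enc_pair enc) (fun dn => q (fst dn) (snd dn)) /\
    (forall d n, Rabs (r d - q d n) < / 2 ^ n).

(* a closed interval [lo, hi] is represented by the pair (lo, hi) *)
Definition forecasting_system := situation -> R * R.

Definition precise_fs (phi : situation -> R) : forecasting_system :=
  fun s => (phi s, phi s).
Definition stationary_fs (p q : R) : forecasting_system := fun _ => (p, q).

Definition process := situation -> R.

Definition Ex (r : R) (f : bool -> R) : R := r * f true + (1 - r) * f false.

Definition Delta (F : process) (s : situation) : bool -> R :=
  fun x => F (s ++ [x]) - F s.

Definition supermartingale (phi : forecasting_system) (M : process) : Prop :=
  forall s r, fst (phi s) <= r <= snd (phi s) -> Ex r (Delta M s) <= 0.

Definition test_process (F : process) : Prop :=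
  (forall s, 0 <= F s) /\ F nil = 1.

Definition multiplier_process (D : situation -> bool -> R) : Prop :=
  forall s x, 0 <= D s x.

Definition generated_by (D : situation -> bool -> R) (F : process) : Prop :=
  F nil = 1 /\ forall s x, F (s ++ [x]) = F s * D s x.

Definition F_ML (F : process) : Prop :=
  test_process F /\ lower_semicomputable enc_sit F.

Definition F_wML (F : process) : Prop :=
  test_process F /\
  exists D, multiplier_process D /\
    lower_semicomputable enc_sitx (fun p => D (fst p) (snd p)) /\
    generated_by D F.

(* F_C = F_S : positive rational-valued recursive test processes *)
Definition F_C (F : process) : Prop :=
  test_process F /\ (forall s, 0 < F s) /\ rec_rat enc_sit F.

Definition limsup_infinite (T : process) (omega : nat -> bool) : Prop :=
  forall B, exists n, B < T (prefix omega n).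

Definition real_growth_function (tau : nat -> R) : Prop :=
  computable_real enc_nat tau /\ (forall n, 0 <= tau n) /\
  (forall n, tau n <= tau (S n)) /\ (forall B, exists n, B < tau n).

Definition limsup_ge0 (T : process) (tau : nat -> R) (omega : nat -> bool) : Prop :=
  forall eps, 0 < eps -> forall N, exists n, (N <= n)%nat /\
    - eps < T (prefix omega n) - tau n.

Inductive rkind := RK_ML | RK_wML | RK_C | RK_S.

Definition random (k : rkind) (phi : forecasting_system) (omega : nat -> bool) : Prop :=
  match k with
  | RK_ML => ~ exists T, F_ML T /\ supermartingale phi T /\ limsup_infinite T omega
  | RK_wML => ~ exists T, F_wML T /\ supermartingale phi T /\ limsup_infinite T omega
  | RK_C => ~ exists T, F_C T /\ supermartingale phi T /\ limsup_infinite T omega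
  | RK_S => ~ exists T tau, F_C T /\ supermartingale phi T /\
              real_growth_function tau /\ limsup_ge0 T tau omega
  end.

(* Main.v *)
Require Import Defs.
From Stdlib Require Import Reals List.
Open Scope R_scope.

From Stdlib Require Import Lra Lia Arith Cantor ClassicalEpsilon FunctionalExtensionality.
Require Import Defs.
Import ListNotations.

Open Scope nat_scope.

Definition C1 (f g : rec) := RComp f [g].
Definition C2 (f g1 g2 : rec) := RComp f [g1; g2].

Lemma eval_C1 f g xs a y : eval g xs a -> eval f [a] y -> eval (C1 f g) xs y.
Proof. intros H1 H2. eapply ev_comp; [|exact H2]. repeat constructor; auto. Qed.

Lemma eval_C2 f g1 g2 xs a b y :
  eval g1 xs a -> eval g2 xs b -> eval f [a; b] y -> eval (C2 f g1 g2) xs y.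
Proof. intros H1 H2 H3. eapply ev_comp; [|exact H3]. repeat constructor; auto. Qed.

Lemma eval_proj i xs y : nth i xs 0%nat = y -> eval (RProj i) xs y.
Proof. intros <-. constructor. Qed.

Fixpoint Const (k : nat) : rec := match k with 0 => RZero | S k => C1 RSucc (Const k) end.
Lemma eval_Const k xs : eval (Const k) xs k.
Proof. induction k; simpl. constructor. eapply eval_C1; eauto. constructor. Qed.

Definition Add := RPrimRec (RProj 0) (C1 RSucc (RProj 1)).
Lemma eval_Add x y : eval Add [x; y] (x + y).
Proof.
  induction x; simpl.
  - apply ev_pr0. apply eval_proj. reflexivity.
  - eapply ev_prS; [exact IHx|]. eapply eval_C1. apply eval_proj. reflexivity. constructor.
Qed.

Definition Mul := RPrimRec RZero (C2 Add (RProj 1) (RProj 2)).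
Lemma eval_Mul x y : eval Mul [x; y] (x * y).
Proof.
  induction x; simpl.
  - apply ev_pr0. constructor.
  - eapply ev_prS; [exact IHx|]. eapply eval_C2. apply eval_proj; reflexivity.
    apply eval_proj; reflexivity. replace (y + x * y) with (x * y + y) by lia. apply eval_Add.
Qed.

Definition Pred := RPrimRec RZero (RProj 0).
Lemma eval_Pred x : eval Pred [x] (pred x).
Proof. induction x; simpl. apply ev_pr0; constructor.
  eapply ev_prS. exact IHx. apply eval_proj; reflexivity. Qed.

Definition Subr := RPrimRec (RProj 0) (C1 Pred (RProj 1)).
Lemma eval_Subr y x : eval Subr [y; x] (x - y).
Proof.
  induction y; simpl.
  - apply ev_pr0. apply eval_proj. simpl. lia.
  - eapply ev_prS; [exact IHy|]. eapply eval_C1. apply eval_proj; reflexivity.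
    replace (x - S y) with (pred (x - y)) by lia. apply eval_Pred.
Qed.

Definition Sub := C2 Subr (RProj 1) (RProj 0).
Lemma eval_Sub x y : eval Sub [x; y] (x - y).
Proof. eapply eval_C2; try (apply eval_proj; reflexivity). apply eval_Subr. Qed.

Lemma eval_AddP g1 g2 xs a b : eval g1 xs a -> eval g2 xs b -> eval (C2 Add g1 g2) xs (a + b).
Proof. intros; eapply eval_C2; eauto; apply eval_Add. Qed.
Lemma eval_MulP g1 g2 xs a b : eval g1 xs a -> eval g2 xs b -> eval (C2 Mul g1 g2) xs (a * b).
Proof. intros; eapply eval_C2; eauto; apply eval_Mul. Qed.
Lemma eval_SubP g1 g2 xs a b : eval g1 xs a -> eval g2 xs b -> eval (C2 Sub g1 g2) xs (a - b).
Proof. intros; eapply eval_C2; eauto; apply eval_Sub. Qed.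

Definition Sg (g : rec) := C2 Sub (Const 1) (C2 Sub (Const 1) g).
Lemma eval_Sg g xs a : eval g xs a -> eval (Sg g) xs (1 - (1 - a)).
Proof. intros; repeat (apply eval_SubP; auto); apply eval_Const. Qed.

Definition ModG (D : nat) :=
  C2 Mul (C1 RSucc (RProj 1)) (Sg (C2 Sub (Const D) (C1 RSucc (RProj 1)))).
Definition ModD (D : nat) := RPrimRec RZero (ModG D).

Lemma mod_step m D : (1 <= D)%nat ->
  (S m) mod D = S (m mod D) * (1 - (1 - (D - S (m mod D)))).
Proof.
  intros HD. pose proof (Nat.div_mod m D ltac:(lia)) as Hm.
  pose proof (Nat.mod_upper_bound m D ltac:(lia)) as Hr.
  set (r := m mod D) in *. set (qq := m / D) in *.
  destruct (Nat.lt_ge_cases (S r) D) as [Hl|Hl].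
  - replace (S r * (1 - (1 - (D - S r)))) with (S r) by nia.
    symmetry. apply (Nat.mod_unique (S m) D qq (S r)); lia.
  - replace (S r * (1 - (1 - (D - S r)))) with 0 by nia.
    symmetry. apply (Nat.mod_unique (S m) D (S qq) 0); lia.
Qed.

Lemma eval_ModD D m : (1 <= D)%nat -> eval (ModD D) [m] (m mod D).
Proof.
  intros HD. induction m.
  - rewrite Nat.Div0.mod_0_l by lia. apply ev_pr0. constructor.
  - eapply ev_prS; [exact IHm|]. rewrite mod_step by lia.
    apply eval_MulP. eapply eval_C1. apply eval_proj; reflexivity. constructor.
    apply eval_Sg. apply eval_SubP. apply eval_Const. eapply eval_C1. apply eval_proj; reflexivity. constructor.
Qed.

Definition ext_bn (c0 D m : nat) : bool := (c0 <=? m) && ((m - c0) mod D =? 0).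

Definition ExtP (c0 D : nat) : rec :=
  C2 Mul (Sg (C2 Sub (C1 RSucc (RProj 0)) (Const c0)))
         (C2 Sub (Const 1) (C1 (ModD D) (C2 Sub (RProj 0) (Const c0)))).

Lemma eval_ExtP c0 D xs m : (1 <= D)%nat -> nth 0 xs 0%nat = m ->
  eval (ExtP c0 D) xs (if ext_bn c0 D m then 1 else 0).
Proof.
  intros HD Hm.
  assert (E : eval (ExtP c0 D) xs ((1 - (1 - (S m - c0))) * (1 - (m - c0) mod D))).
  { apply eval_MulP. apply eval_Sg. apply eval_SubP. eapply eval_C1. apply eval_proj; eauto.
    constructor. apply eval_Const. apply eval_SubP. apply eval_Const. eapply eval_C1.
    apply eval_SubP. apply eval_proj; eauto. apply eval_Const. apply eval_ModD; auto. }
  unfold ext_bn. destruct (Nat.leb_spec c0 m); destruct (Nat.eqb_spec ((m - c0) mod D) 0); simpl.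
  - rewrite e in E. replace ((1 - (1 - (S m - c0))) * (1 - 0)) with 1 in E by lia. exact E.
  - replace ((1 - (1 - (S m - c0))) * (1 - (m - c0) mod D)) with 0 in E by nia. exact E.
  - replace ((1 - (1 - (S m - c0))) * (1 - (m - c0) mod D)) with 0 in E by nia. exact E.
  - replace ((1 - (1 - (S m - c0))) * (1 - (m - c0) mod D)) with 0 in E by nia. exact E.
Qed.

Fixpoint rec_ind' (P : rec -> Prop)
  (HZ : P RZero) (HS : P RSucc) (HP : forall i, P (RProj i))
  (HC : forall f gs, P f -> Forall P gs -> P (RComp f gs))
  (HR : forall f g, P f -> P g -> P (RPrimRec f g))
  (HM : forall f, P f -> P (RMu f)) (r : rec) {struct r} : P r :=
  match r with
  | RZero => HZ | RSucc => HS | RProj i => HP i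
  | RComp f gs => HC f gs (rec_ind' P HZ HS HP HC HR HM f)
      ((fix G (l : list rec) : Forall P l :=
          match l with nil => Forall_nil P
          | g :: l' => Forall_cons g (rec_ind' P HZ HS HP HC HR HM g) (G l') end) gs)
  | RPrimRec f g => HR f g (rec_ind' P HZ HS HP HC HR HM f) (rec_ind' P HZ HS HP HC HR HM g)
  | RMu f => HM f (rec_ind' P HZ HS HP HC HR HM f)
  end.

Definition det (c : rec) := forall xs y1 y2, eval c xs y1 -> eval c xs y2 -> y1 = y2.

Lemma eval_det : forall c, det c.
Proof.
  apply rec_ind'; unfold det.
  - intros xs y1 y2 H1 H2. inversion H1; inversion H2; subst; auto.
  - intros xs y1 y2 H1 H2. inversion H1; inversion H2; subst; auto. congruence.
  - intros i xs y1 y2 H1 H2. inversion H1; inversion H2; subst; auto.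
  - intros f gs Hf Hgs xs y1 y2 H1 H2. inversion H1 as [| | |f' gs' xs' ys y' E1 F1| | |]; subst.
    inversion H2 as [| | |f'' gs'' xs'' ys0 y'' E2 F2| | |]; subst.
    assert (ys = ys0).
    { clear F1 F2 H1 H2. revert ys ys0 E1 E2. induction Hgs; intros ys ys0 E1 E2.
      - inversion E1; inversion E2; subst; auto.
      - inversion E1; subst; inversion E2; subst. f_equal. eapply H; eauto. eapply IHHgs; eauto. }
    subst. eapply Hf; eauto.
  - intros f g Hf Hg xs y1 y2 H1 H2.
    destruct xs as [|n xs]. inversion H1.
    revert y1 y2 H1 H2. induction n; intros y1 y2 H1 H2.
    + inversion H1; subst; inversion H2; subst. eapply Hf; eauto.
    + inversion H1; subst; inversion H2; subst.
      assert (z = z0) by (eapply IHn; eauto). subst. eapply Hg; eauto.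
  - intros f Hf xs y1 y2 H1 H2. inversion H1 as [| | | | | |f1 xs1 y1' Z1 L1]; subst.
    inversion H2 as [| | | | | |f2 xs2 y2' Z2 L2]; subst.
    destruct (Nat.lt_trichotomy y1 y2) as [L|[L|L]]; auto.
    + destruct (L2 y1 L) as [m [Hm Em]]. exfalso. apply Hm. symmetry. eapply (Hf _ _ _ Z1 Em).
    + destruct (L1 y2 L) as [m [Hm Em]]. exfalso. apply Hm. symmetry. eapply (Hf _ _ _ Z2 Em).
Qed.

Definition pr (a b : nat) : nat := to_nat (a, b).
Lemma pr_inj a b c d : pr a b = pr c d -> a = c /\ b = d.
Proof. unfold pr. intros H. assert (E := f_equal of_nat H). rewrite !cancel_of_to in E.
  inversion E; auto. Qed.

Fixpoint encR (r : rec) : nat :=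
  match r with
  | RZero => pr 0 0 | RSucc => pr 1 0 | RProj i => pr 2 i
  | RComp f gs => pr 3 (pr (encR f)
      ((fix encL (l : list rec) : nat := match l with nil => 0 | g :: l' => S (pr (encR g) (encL l')) end) gs))
  | RPrimRec f g => pr 4 (pr (encR f) (encR g))
  | RMu f => pr 5 (encR f)
  end.


Definition W := (rec * rec * rec)%type.
Definition encW (w : W) : nat := match w with (a, b, c) => pr (encR a) (pr (encR b) (encR c)) end.

Lemma encR_inj : forall r1 r2, encR r1 = encR r2 -> r1 = r2.
Proof.
  apply (rec_ind' (fun r1 => forall r2, encR r1 = encR r2 -> r1 = r2));
  intros; destruct r2; simpl in *;
  repeat match goal with H : pr _ _ = pr _ _ |- _ => apply pr_inj in H; destruct H end;
  try discriminate; subst; auto.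
  - f_equal; auto. match goal with H : _ gs = _ gs0 |- _ => revert H end.
    revert gs0. induction H0; intros l0 E; destruct l0; simpl in *; try discriminate; auto.
    injection E as E. apply pr_inj in E. destruct E. f_equal; auto.
  - f_equal; auto.
  - f_equal; auto.
Qed.

Lemma encW_inj w1 w2 : encW w1 = encW w2 -> w1 = w2.
Proof. destruct w1 as [[a b] c], w2 as [[a' b'] c']; simpl. intros H.
  apply pr_inj in H as [H1 H2]. apply pr_inj in H2 as [H2 H3].
  apply encR_inj in H1, H2, H3. subst; auto. Qed.

Definition progs {D : Type} (enc : D -> list nat) (w : W) (r : D -> R) : Prop :=
  match w with (ca, cb, cc) => forall d, exists a b c : nat,
    eval ca (enc d) a /\ eval cb (enc d) b /\ eval cc (enc d) c /\
    r d = ((INR a - INR b) / (INR c + 1))%R end.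

Lemma rec_rat_progs {D} (enc : D -> list nat) r : rec_rat enc r <-> exists w, progs enc w r.
Proof. split. intros [ca [cb [cc H]]]. exists (ca, cb, cc). exact H.
  intros [[[ca cb] cc] H]. exists ca, cb, cc. exact H. Qed.

Lemma progs_unique {D} (enc : D -> list nat) w r1 r2 : progs enc w r1 -> progs enc w r2 -> forall d, r1 d = r2 d.
Proof. destruct w as [[ca cb] cc]; simpl. intros H1 H2 d.
  destruct (H1 d) as [a [b [c [Ha [Hb [Hc E]]]]]]. destruct (H2 d) as [a' [b' [c' [Ha' [Hb' [Hc' E']]]]]].
  rewrite E, E'. rewrite (eval_det _ _ _ _ Ha Ha'), (eval_det _ _ _ _ Hb Hb'), (eval_det _ _ _ _ Hc Hc'). auto. Qed.

Lemma rec_rat_trans {D : Type} (enc : D -> list nat) (f : D -> R) (bp : rec) (bit : D -> bool) (K : nat) :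
  rec_rat enc f -> (forall d, eval bp (enc d) (if bit d then 1%nat else 0%nat)) -> (1 <= K)%nat ->
  rec_rat enc (fun d => if bit d then (f d / INR K)%R else 1%R).
Proof.
  intros [ca [cb [cc H]]] Hb HK.
  exists (C2 Add (C2 Mul bp ca) (C2 Mul (C2 Sub (Const 1) bp) (Const 1))),
         (C2 Mul bp cb),
         (C2 Mul bp (C2 Add (C2 Mul (Const K) cc) (Const (K - 1)))).
  intros d. destruct (H d) as [a [b [c [Ha [Hbb [Hc E]]]]]]. specialize (Hb d).
  destruct (bit d).
  - exists a, b, (K * c + (K - 1))%nat. repeat split.
    + assert (X : eval (C2 Add (C2 Mul bp ca) (C2 Mul (C2 Sub (Const 1) bp) (Const 1))) (enc d) (1 * a + (1 - 1) * 1)%nat).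
      { repeat (apply eval_AddP || apply eval_MulP || apply eval_SubP); auto; apply eval_Const. }
      replace (1 * a + (1 - 1) * 1)%nat with a in X by lia. exact X.
    + assert (X : eval (C2 Mul bp cb) (enc d) (1 * b)%nat).
      { repeat (apply eval_AddP || apply eval_MulP || apply eval_SubP); auto; apply eval_Const. }
      replace (1 * b)%nat with b in X by lia. exact X.
    + assert (X : eval (C2 Mul bp (C2 Add (C2 Mul (Const K) cc) (Const (K - 1)))) (enc d) (1 * (K * c + (K - 1)))%nat).
      { repeat (apply eval_AddP || apply eval_MulP || apply eval_SubP); auto; apply eval_Const. }
      replace (1 * (K * c + (K - 1)))%nat with (K * c + (K - 1))%nat in X by lia. exact X.
    + rewrite E. rewrite plus_INR, mult_INR, minus_INR by lia. simpl.
      assert (1 <= INR K)%R by (apply (le_INR 1); auto).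
      assert (0 <= INR c)%R by apply pos_INR.
      field. repeat split; nra.
  - exists 1%nat, 0%nat, 0%nat. repeat split.
    + assert (X : eval (C2 Add (C2 Mul bp ca) (C2 Mul (C2 Sub (Const 1) bp) (Const 1))) (enc d) (0 * a + (1 - 0) * 1)%nat).
      { repeat (apply eval_AddP || apply eval_MulP || apply eval_SubP); auto; apply eval_Const. }
      replace (0 * a + (1 - 0) * 1)%nat with 1%nat in X by lia. exact X.
    + assert (X : eval (C2 Mul bp cb) (enc d) (0 * b)%nat).
      { repeat (apply eval_AddP || apply eval_MulP || apply eval_SubP); auto; apply eval_Const. }
      replace (0 * b)%nat with 0%nat in X by lia. exact X.
    + assert (X : eval (C2 Mul bp (C2 Add (C2 Mul (Const K) cc) (Const (K - 1)))) (enc d) (0 * (K * c + (K - 1)))%nat).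
      { repeat (apply eval_AddP || apply eval_MulP || apply eval_SubP); auto; apply eval_Const. }
      replace (0 * (K * c + (K - 1)))%nat with 0%nat in X by lia. exact X.
    + simpl. field.
Qed.

Lemma code_app s u : code (s ++ u) = code s + 2 ^ length s * code u.
Proof. induction s as [|b s IH]; simpl. lia. rewrite IH. destruct b; lia. Qed.

Lemma code_inj : forall s t, code s = code t -> s = t.
Proof. induction s as [|b s IH]; destruct t as [|c t]; simpl; intros H; try (destruct b; lia);
  try (destruct c; lia); auto.
  destruct b, c; try lia; f_equal; apply IH; lia. Qed.

Lemma code_surj : forall m, exists u, code u = m.
Proof.
  intros m. induction m as [m IH] using (well_founded_induction lt_wf).
  destruct m as [|m]. exists nil; reflexivity.
  destruct (Nat.Even_or_Odd m) as [[k Hk]|[k Hk]].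
  - destruct (IH k ltac:(lia)) as [u Hu]. exists (false :: u). simpl. lia.
  - destruct (IH k ltac:(lia)) as [u Hu]. exists (true :: u). simpl. lia.
Qed.

Lemma ext_bn_spec s0 t : ext_bn (code s0) (2 ^ length s0) (code t) = true <-> exists u, t = s0 ++ u.
Proof.
  assert (HD : 2 ^ length s0 <> 0) by (apply Nat.pow_nonzero; lia).
  unfold ext_bn. rewrite Bool.andb_true_iff, Nat.leb_le, Nat.eqb_eq. split.
  - intros [H1 H2]. apply Nat.Div0.mod_divides in H2 as [k Hk].
    destruct (code_surj k) as [u Hu]. exists u. apply code_inj. rewrite code_app. lia.
  - intros [u ->]. rewrite code_app. split. lia.
    replace (code s0 + 2 ^ length s0 * code u - code s0) with (code u * 2 ^ length s0) by lia.
    apply Nat.Div0.mod_mul.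
Qed.

Definition ext_b (s0 t : situation) : bool := ext_bn (code s0) (2 ^ length s0) (code t).

Lemma eval_ext s0 xs t : nth 0 xs 0 = code t ->
  eval (ExtP (code s0) (2 ^ length s0)) xs (if ext_b s0 t then 1 else 0).
Proof. intros H. apply eval_ExtP; auto. pose proof (Nat.pow_nonzero 2 (length s0)). lia. Qed.

Lemma prefix_app omega N k : prefix omega (N + k) = prefix omega N ++ map omega (seq N k).
Proof. unfold prefix. rewrite seq_app, map_app. reflexivity. Qed.

Lemma prefix_len omega n : length (prefix omega n) = n.
Proof. unfold prefix. rewrite length_map, length_seq. auto. Qed.

Lemma not_ext_child (s0 t : situation) (x : bool) : ~ (exists u, t = s0 ++ u) -> (exists u, t ++ [x] = s0 ++ u) -> t ++ [x] = s0.
Proof.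
  intros H1 [u Hu]. induction u as [|y u' _] using rev_ind.
  - rewrite app_nil_r in Hu. auto.
  - exfalso. apply H1. exists u'. rewrite app_assoc in Hu. apply app_inj_tail in Hu. tauto.
Qed.

Open Scope R_scope.

Definition Aset (p q : R) (T : process) (s : situation) : Prop :=
  0 < Ex p (Delta T s) \/ 0 < Ex q (Delta T s).
Definition wrong (p q : R) (T : process) (s : situation) : R :=
  if Rlt_dec 0 (Ex p (Delta T s)) then p else q.

Lemma wrong_pos p q T s : Aset p q T s -> 0 < Ex (wrong p q T s) (Delta T s).
Proof. unfold wrong. destruct (Rlt_dec 0 (Ex p (Delta T s))); auto. intros [H|H]; auto; lra. Qed.

Lemma wrong_range p q T s : wrong p q T s = p \/ wrong p q T s = q.
Proof. unfold wrong. destruct (Rlt_dec _ _); auto. Qed.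

Lemma Ex_between (f : bool -> R) p q r : p <= r <= q -> Ex p f <= 0 -> Ex q f <= 0 -> Ex r f <= 0.
Proof. unfold Ex. intros [H1 H2] Hp Hq.
  destruct (Rle_dec 0 (f true - f false)).
  - assert (r * (f true - f false) <= q * (f true - f false)) by (apply Rmult_le_compat_r; lra). lra.
  - assert (r * (f true - f false) <= p * (f true - f false)) by nra. lra.
Qed.

Definition BadP (p q : R) (Wit : W -> process -> Prop) (i M : nat) (x : W * process * situation) : Prop :=
  encW (fst (fst x)) = i /\ Wit (fst (fst x)) (snd (fst x)) /\ Aset p q (snd (fst x)) (snd x) /\
  (M <= length (snd x))%nat.

Definition pick (p q : R) (Wit : W -> process -> Prop) (i M : nat) : option (situation * R) :=
  match excluded_middle_informative (exists x, BadP p q Wit i M x) with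
  | left H => let x := proj1_sig (constructive_indefinite_description _ H) in
              Some (snd x, wrong p q (snd (fst x)) (snd x))
  | right _ => None
  end.

Lemma pick_spec p q Wit i M s v : pick p q Wit i M = Some (s, v) ->
  (M <= length s)%nat /\ exists w T, encW w = i /\ Wit w T /\ Aset p q T s /\ v = wrong p q T s.
Proof.
  unfold pick. destruct (excluded_middle_informative _) as [H|H]; [|discriminate].
  destruct (constructive_indefinite_description _ H) as [[[w T] s'] [H1 [H2 [H3 H4]]]]; simpl in *.
  intros E; injection E as <- <-. split; auto. exists w, T; auto.
Qed.

Lemma pick_some p q Wit i M : (exists x, BadP p q Wit i M x) -> exists s v, pick p q Wit i M = Some (s, v).
Proof. intros H. unfold pick. destruct (excluded_middle_informative _) as [H'|H']; [|contradiction].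
  eexists; eexists; reflexivity. Qed.

Fixpoint Mseq (p q : R) (Wit : W -> process -> Prop) (i : nat) : nat :=
  match i with
  | O => 1%nat
  | S i => match pick p q Wit i (Mseq p q Wit i) with
           | Some (s, _) => S (length s)
           | None => Mseq p q Wit i end
  end.

Lemma Mseq_step_le p q Wit i : (Mseq p q Wit i <= Mseq p q Wit (S i))%nat.
Proof. simpl. destruct (pick p q Wit i (Mseq p q Wit i)) as [[s v]|] eqn:E; auto.
  apply pick_spec in E. lia. Qed.

Lemma Mseq_mono p q Wit i j : (i <= j)%nat -> (Mseq p q Wit i <= Mseq p q Wit j)%nat.
Proof. induction 1; auto. pose proof (Mseq_step_le p q Wit m). lia. Qed.

Lemma Mseq_step p q Wit i s v : pick p q Wit i (Mseq p q Wit i) = Some (s, v) ->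
  (length s < Mseq p q Wit (S i))%nat.
Proof. intros E. simpl. rewrite E. lia. Qed.

Lemma pick_uniq p q Wit i j s v v' :
  pick p q Wit i (Mseq p q Wit i) = Some (s, v) -> pick p q Wit j (Mseq p q Wit j) = Some (s, v') -> i = j.
Proof.
  intros E1 E2. destruct (Nat.lt_trichotomy i j) as [L|[L|L]]; auto; exfalso.
  - pose proof (Mseq_step _ _ _ _ _ _ E1). pose proof (Mseq_mono p q Wit (S i) j L).
    apply pick_spec in E2. lia.
  - pose proof (Mseq_step _ _ _ _ _ _ E2). pose proof (Mseq_mono p q Wit (S j) i L).
    apply pick_spec in E1. lia.
Qed.

Definition phiC (p q : R) (Wit : W -> process -> Prop) (s : situation) : R :=
  match excluded_middle_informative
          (exists iv : nat * R, pick p q Wit (fst iv) (Mseq p q Wit (fst iv)) = Some (s, snd iv)) with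
  | left H => snd (proj1_sig (constructive_indefinite_description _ H))
  | right _ => p
  end.

Lemma phi_val p q Wit i s v : pick p q Wit i (Mseq p q Wit i) = Some (s, v) -> phiC p q Wit s = v.
Proof.
  intros E. unfold phiC. destruct (excluded_middle_informative _) as [H|H].
  - destruct (constructive_indefinite_description _ H) as [[j v'] E']; simpl in *.
    pose proof (pick_uniq _ _ _ _ _ _ _ _ E E'). subst. rewrite E in E'. congruence.
  - exfalso. apply H. exists (i, v). auto.
Qed.

Lemma phi_range p q Wit s : p <= q -> p <= phiC p q Wit s <= q.
Proof.
  intros Hpq. unfold phiC. destruct (excluded_middle_informative _) as [H|H]; [|lra].
  destruct (constructive_indefinite_description _ H) as [[j v'] E']; simpl in *.
  apply pick_spec in E' as [_ [w [T [_ [_ [_ ->]]]]]].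
  destruct (wrong_range p q T s) as [-> | ->]; lra.
Qed.

Lemma survivor p q Wit
  (Huniq : forall w T1 T2, Wit w T1 -> Wit w T2 -> T1 = T2) w T :
  Wit w T -> supermartingale (precise_fs (phiC p q Wit)) T ->
  forall s, Aset p q T s -> (length s < Mseq p q Wit (encW w))%nat.
Proof.
  intros HW HS s HA. destruct (Nat.lt_ge_cases (length s) (Mseq p q Wit (encW w))) as [L|L]; auto.
  exfalso.
  destruct (pick_some p q Wit (encW w) (Mseq p q Wit (encW w))) as [s' [v E]].
  { exists (w, T, s). repeat split; auto. }
  pose proof (phi_val _ _ _ _ _ _ E) as Hv.
  apply pick_spec in E as [_ [w' [T' [Ew [HW' [HA' ->]]]]]].
  apply encW_inj in Ew. subst w'. pose proof (Huniq _ _ _ HW HW'). subst T'.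
  pose proof (wrong_pos _ _ _ _ HA').
  specialize (HS s' (phiC p q Wit s')). simpl in HS. rewrite Hv in HS. specialize (HS (conj (Rle_refl _) (Rle_refl _))).
  lra.
Qed.

Lemma stat_to_precise p q Wit T : p <= q ->
  supermartingale (stationary_fs p q) T -> supermartingale (precise_fs (phiC p q Wit)) T.
Proof. intros Hpq H s r Hr. simpl in Hr. apply H. simpl. pose proof (phi_range p q Wit s Hpq). lra. Qed.

Lemma nat_above (x : R) : exists K : nat, (1 <= K)%nat /\ x <= INR K.
Proof. destruct (INR_archimed 1 x) as [n Hn]; [lra|]. exists (S n). split. lia.
  rewrite S_INR. lra. Qed.

Lemma fin_bound (f : nat -> R) N : exists B, forall m, (m < N)%nat -> f m <= B.
Proof. induction N as [|N [B HB]]. exists 0. intros; lia.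
  exists (Rmax B (f N)). intros m Hm. destruct (Nat.eq_dec m N) as [->|H].
  apply Rmax_r. eapply Rle_trans; [apply HB; lia | apply Rmax_l]. Qed.

Lemma prefix_ext omega N n : (N <= n)%nat -> ext_b (prefix omega N) (prefix omega n) = true.
Proof. intros H. unfold ext_b. apply ext_bn_spec. exists (map omega (seq N (n - N))).
  replace n with (N + (n - N))%nat at 1 by lia. apply prefix_app. Qed.

Lemma ext_child s0 t x : ext_b s0 t = true -> ext_b s0 (t ++ [x]) = true.
Proof. unfold ext_b. rewrite !ext_bn_spec. intros [u ->]. exists (u ++ [x]). rewrite app_assoc; auto. Qed.

Lemma ext_len s0 t : ext_b s0 t = true -> (length s0 <= length t)%nat.
Proof. unfold ext_b. rewrite ext_bn_spec. intros [u ->]. rewrite length_app. lia. Qed.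

Lemma ext_nil s0 : s0 <> nil -> ext_b s0 nil = false.
Proof. intros H. destruct (ext_b s0 nil) eqn:E; auto. unfold ext_b in E. apply ext_bn_spec in E.
  destruct E as [u Hu]. destruct s0; [congruence|discriminate]. Qed.

Lemma ext_nonext_child s0 t x : ext_b s0 t = false -> ext_b s0 (t ++ [x]) = true -> t ++ [x] = s0.
Proof. unfold ext_b. intros H1 H2. apply ext_bn_spec in H2. apply not_ext_child; auto.
  intros H. apply ext_bn_spec in H. congruence. Qed.

Definition Tfix (s0 : situation) (c : R) (T : process) : process :=
  fun t => if ext_b s0 t then T t / c else 1.

Lemma Tfix_super p q s0 c T : 0 <= p -> q <= 1 -> 0 < c -> T s0 <= c ->
  (forall t, (length s0 <= length t)%nat -> ~ Aset p q T t) ->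
  supermartingale (stationary_fs p q) (Tfix s0 c T).
Proof.
  intros Hp Hq Hc Hs0 HA s r Hr. simpl in Hr.
  destruct (ext_b s0 s) eqn:E.
  - assert (E1 := ext_child s0 s true E). assert (E0 := ext_child s0 s false E).
    assert (HnA := HA s (ext_len _ _ E)). unfold Aset in HnA.
    assert (Ex r (Delta T s) <= 0) by (apply (Ex_between _ p q); [lra| |]; lra).
    unfold Ex, Delta, Tfix in *. rewrite E, E1, E0.
    assert (0 < / c) by (apply Rinv_0_lt_compat; auto).
    replace (r * (T (s ++ [true]) / c - T s / c) + (1 - r) * (T (s ++ [false]) / c - T s / c))
      with ((r * (T (s ++ [true]) - T s) + (1 - r) * (T (s ++ [false]) - T s)) * / c) by (field; lra).
    nra.
  - assert (Hx : forall x, Delta (Tfix s0 c T) s x <= 0).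
    { intros x. unfold Delta, Tfix. rewrite E. destruct (ext_b s0 (s ++ [x])) eqn:E'.
      - rewrite (ext_nonext_child _ _ _ E E').
        assert (T s0 / c <= 1). { apply (Rmult_le_reg_r c); auto. field_simplify; lra. } lra.
      - lra. }
    unfold Ex. pose proof (Hx true). pose proof (Hx false). nra.
Qed.

Definition WitC (w : W) (T : process) : Prop := progs enc_sit w T.
Definition WitML (w : W) (T : process) : Prop :=
  exists qf : situation -> nat -> R, progs (enc_pair enc_sit) w (fun dn => qf (fst dn) (snd dn)) /\
    forall d, Un_cv (qf d) (T d).
Definition WitW (w : W) (T : process) : Prop :=
  exists (D : situation -> bool -> R) (qf : situation * bool -> nat -> R),
    progs (enc_pair enc_sitx) w (fun dn => qf (fst dn) (snd dn)) /\
    (forall d, Un_cv (qf d) (D (fst d) (snd d))) /\ generated_by D T.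

Definition Wit (k : rkind) : W -> process -> Prop :=
  match k with RK_ML => WitML | RK_wML => WitW | _ => WitC end.

Lemma WitC_uniq w T1 T2 : WitC w T1 -> WitC w T2 -> T1 = T2.
Proof. intros H1 H2. apply functional_extensionality. apply (progs_unique _ _ _ _ H1 H2). Qed.

Lemma WitML_uniq w T1 T2 : WitML w T1 -> WitML w T2 -> T1 = T2.
Proof.
  intros [q1 [H1 C1]] [q2 [H2 C2]]. apply functional_extensionality. intros d.
  pose proof (progs_unique _ _ _ _ H1 H2) as E.
  apply (UL_sequence (q1 d)); auto.
  replace (q1 d) with (q2 d); auto. apply functional_extensionality. intros n. symmetry. apply (E (d, n)).
Qed.

Lemma gen_uniq D1 D2 T1 T2 : (forall s x, D1 s x = D2 s x) -> generated_by D1 T1 -> generated_by D2 T2 -> T1 = T2.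
Proof.
  intros HD [N1 S1] [N2 S2]. apply functional_extensionality. intros s.
  induction s as [|x s IH] using rev_ind. congruence. rewrite S1, S2, IH, HD. auto.
Qed.

Lemma WitW_uniq w T1 T2 : WitW w T1 -> WitW w T2 -> T1 = T2.
Proof.
  intros [D1 [q1 [H1 [C1 G1]]]] [D2 [q2 [H2 [C2 G2]]]].
  pose proof (progs_unique _ _ _ _ H1 H2) as E.
  apply (gen_uniq D1 D2); auto. intros s x.
  apply (UL_sequence (q1 (s, x))). apply (C1 (s, x)).
  replace (q1 (s, x)) with (q2 (s, x)). apply (C2 (s, x)).
  apply functional_extensionality. intros n. symmetry. apply (E ((s, x), n)).
Qed.

Lemma Wit_uniq k w T1 T2 : Wit k w T1 -> Wit k w T2 -> T1 = T2.
Proof. destruct k; simpl. apply WitML_uniq. apply WitW_uniq. apply WitC_uniq. apply WitC_uniq. Qed.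

Lemma core_bound p q k w T :
  Wit k w T -> supermartingale (precise_fs (phiC p q (Wit k))) T ->
  exists N0, (1 <= N0)%nat /\ forall t, (N0 <= length t)%nat -> ~ Aset p q T t.
Proof.
  intros HW HS. exists (Mseq p q (Wit k) (encW w)). split.
  - apply (Mseq_mono p q (Wit k) 0). lia.
  - intros t Ht HA. pose proof (survivor p q (Wit k) (Wit_uniq k) w T HW HS t HA). lia.
Qed.

Lemma Un_cv_div (u : nat -> R) l c : 1 <= c -> Un_cv u l -> Un_cv (fun n => u n / c) (l / c).
Proof.
  intros Hc H eps He. destruct (H eps He) as [N HN]. exists N. intros n Hn.
  specialize (HN n Hn). unfold R_dist in *.
  replace (u n / c - l / c) with ((u n - l) * / c) by (field; lra).
  rewrite Rabs_mult, Rabs_inv, (Rabs_pos_eq c) by lra.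
  assert (0 < / c <= 1). { split. apply Rinv_0_lt_compat; lra. rewrite <- Rinv_1. apply Rinv_le_contravar; lra. }
  pose proof (Rabs_pos (u n - l)). nra.
Qed.

Lemma Un_cv_const l : Un_cv (fun _ => l) l.
Proof. intros eps He. exists 0%nat. intros. unfold R_dist. rewrite Rminus_diag, Rabs_R0. auto. Qed.

Lemma rec_rat_ext {D} (enc : D -> list nat) f g : (forall d, f d = g d) -> rec_rat enc f -> rec_rat enc g.
Proof. intros E [a [b [c H]]]. exists a, b, c. intros d. destruct (H d) as [x [y [z [? [? [? Ef]]]]]].
  exists x, y, z. rewrite <- E. auto. Qed.

Lemma limsup_transfer T omega N c : 0 < c -> limsup_infinite T omega ->
  limsup_infinite (Tfix (prefix omega N) c T) omega.
Proof.
  intros Hc H B. destruct (fin_bound (fun m => T (prefix omega m)) N) as [Bn HBn].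
  destruct (H (Rmax (B * c) Bn)) as [n Hn].
  assert (HnN : (N <= n)%nat).
  { destruct (Nat.lt_ge_cases n N) as [L|L]; auto. specialize (HBn n L). simpl in HBn.
    pose proof (Rmax_r (B * c) Bn). lra. }
  exists n. unfold Tfix. rewrite prefix_ext by auto.
  pose proof (Rmax_l (B * c) Bn). apply (Rmult_lt_reg_r c); auto. field_simplify; lra.
Qed.

Lemma Rdiv_le_0_compat a c : 0 <= a -> 0 < c -> 0 <= a / c.
Proof. intros. unfold Rdiv. apply Rmult_le_pos; auto. left; apply Rinv_0_lt_compat; auto. Qed.

Lemma s0_nonnil omega N0 : (1 <= N0)%nat -> prefix omega N0 <> nil.
Proof. intros H E. pose proof (prefix_len omega N0). rewrite E in H0. simpl in H0. lia. Qed.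

Lemma bit_sit s0 : forall d, eval (ExtP (code s0) (2 ^ length s0)) (enc_sit d) (if ext_b s0 d then 1%nat else 0%nat).
Proof. intros d. apply eval_ext. reflexivity. Qed.

Lemma bit_pair s0 : forall dn : situation * nat,
  eval (ExtP (code s0) (2 ^ length s0)) (enc_pair enc_sit dn) (if ext_b s0 (fst dn) then 1%nat else 0%nat).
Proof. intros d. apply eval_ext. reflexivity. Qed.

Lemma bit_pairx s0 : forall dn : situation * bool * nat,
  eval (ExtP (code s0) (2 ^ length s0)) (enc_pair enc_sitx dn) (if ext_b s0 (fst (fst dn)) then 1%nat else 0%nat).
Proof. intros d. apply eval_ext. reflexivity. Qed.

Lemma Tfix_test s0 c T : s0 <> nil -> 0 < c -> (forall s, 0 <= T s) -> test_process (Tfix s0 c T).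
Proof. intros Hs Hc HT. split.
  - intros s. unfold Tfix. destruct (ext_b s0 s). apply Rdiv_le_0_compat; auto. lra.
  - unfold Tfix. rewrite ext_nil; auto. Qed.

Lemma fixC p q T omega N0 : 0 <= p -> q <= 1 -> (1 <= N0)%nat ->
  (forall t, (N0 <= length t)%nat -> ~ Aset p q T t) -> F_C T ->
  exists K : nat, (1 <= K)%nat /\ F_C (Tfix (prefix omega N0) (INR K) T) /\
    supermartingale (stationary_fs p q) (Tfix (prefix omega N0) (INR K) T).
Proof.
  intros Hp Hq HN HA [[HT0 HT1] [Hpos Hrec]].
  set (s0 := prefix omega N0).
  destruct (nat_above (T s0)) as [K [HK HKs]]. exists K. split; auto.
  assert (HKr : 1 <= INR K) by (apply (le_INR 1); auto).
  split; [split; [|split]|].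
  - apply Tfix_test; auto. apply s0_nonnil; auto. lra.
  - intros s. unfold Tfix. destruct (ext_b s0 s). apply Rdiv_lt_0_compat; auto; lra. lra.
  - exact (rec_rat_trans enc_sit T _ (ext_b s0) K Hrec (bit_sit s0) HK).
  - apply Tfix_super; auto. lra. intros t Ht. apply HA. unfold s0 in Ht. rewrite prefix_len in Ht. auto.
Qed.

Lemma fixML p q T omega N0 : 0 <= p -> q <= 1 -> (1 <= N0)%nat ->
  (forall t, (N0 <= length t)%nat -> ~ Aset p q T t) -> F_ML T ->
  exists K : nat, (1 <= K)%nat /\ F_ML (Tfix (prefix omega N0) (INR K) T) /\
    supermartingale (stationary_fs p q) (Tfix (prefix omega N0) (INR K) T).
Proof.
  intros Hp Hq HN HA [[HT0 HT1] [qf [Hrec [Hmon Hcv]]]].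
  set (s0 := prefix omega N0).
  destruct (nat_above (T s0)) as [K [HK HKs]]. exists K. split; auto.
  assert (HKr : 1 <= INR K) by (apply (le_INR 1); auto).
  split; [split|].
  - apply Tfix_test; auto. apply s0_nonnil; auto. lra.
  - exists (fun d n => if ext_b s0 d then qf d n / INR K else 1). split; [|split].
    + exact (rec_rat_trans (enc_pair enc_sit) (fun dn => qf (fst dn) (snd dn)) _
               (fun dn => ext_b s0 (fst dn)) K Hrec (bit_pair s0) HK).
    + intros d n. destruct (ext_b s0 d). unfold Rdiv. apply Rmult_le_compat_r; auto.
      left. apply Rinv_0_lt_compat. lra. lra.
    + intros d. unfold Tfix. destruct (ext_b s0 d). apply Un_cv_div; auto. apply Un_cv_const.
  - apply Tfix_super; auto. lra. intros t Ht. apply HA. unfold s0 in Ht. rewrite prefix_len in Ht. auto.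
Qed.

Lemma gen_zero D T s u : generated_by D T -> T s = 0 -> T (s ++ u) = 0.
Proof. intros [_ HG] H. induction u as [|x u IH] using rev_ind. rewrite app_nil_r; auto.
  rewrite app_assoc, HG, IH. ring. Qed.

Lemma wml_pos D T omega N : generated_by D T -> (forall s, 0 <= T s) -> limsup_infinite T omega ->
  0 < T (prefix omega N).
Proof.
  intros HG HT HL. destruct (Rlt_dec 0 (T (prefix omega N))) as [H|H]; auto. exfalso.
  assert (Z : T (prefix omega N) = 0) by (pose proof (HT (prefix omega N)); lra).
  destruct (fin_bound (fun m => T (prefix omega m)) N) as [Bn HBn].
  destruct (HL (Rmax Bn 0)) as [n Hn].
  destruct (Nat.lt_ge_cases n N) as [L|L].
  - specialize (HBn n L). simpl in HBn. pose proof (Rmax_l Bn 0). lra.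
  - replace n with (N + (n - N))%nat in Hn by lia. rewrite prefix_app in Hn.
    rewrite (gen_zero D T _ _ HG Z) in Hn. pose proof (Rmax_r Bn 0). lra.
Qed.

Lemma fixW p q T omega N0 : 0 <= p -> q <= 1 -> (1 <= N0)%nat ->
  (forall t, (N0 <= length t)%nat -> ~ Aset p q T t) -> F_wML T -> limsup_infinite T omega ->
  F_wML (Tfix (prefix omega N0) (T (prefix omega N0)) T) /\
    supermartingale (stationary_fs p q) (Tfix (prefix omega N0) (T (prefix omega N0)) T) /\
    0 < T (prefix omega N0).
Proof.
  intros Hp Hq HN HA [[HT0 HT1] [D [HD [[qf [Hrec [Hmon Hcv]]] HG]]]] HL.
  set (s0 := prefix omega N0).
  assert (Hpos : 0 < T s0) by (apply (wml_pos D); auto).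
  assert (Hnn : s0 <> nil) by (apply s0_nonnil; auto).
  split; [split|split; auto].
  - apply Tfix_test; auto.
  - exists (fun t x => if ext_b s0 t then D t x else 1). split; [|split].
    + intros s x. destruct (ext_b s0 s); auto. lra.
    + exists (fun sx n => if ext_b s0 (fst sx) then qf sx n else 1). split; [|split].
      * eapply rec_rat_ext; [|exact (rec_rat_trans (enc_pair enc_sitx) (fun dn => qf (fst dn) (snd dn)) _
               (fun dn => ext_b s0 (fst (fst dn))) 1 Hrec (bit_pairx s0) (le_n 1))].
        intros d. simpl. destruct (ext_b s0 (fst (fst d))); auto. field.
      * intros d n. destruct (ext_b s0 (fst d)); auto. lra.
      * intros d. simpl. destruct (ext_b s0 (fst d)); auto. apply Un_cv_const.
    + split. unfold Tfix. rewrite ext_nil; auto.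
      intros s x. unfold Tfix. destruct (ext_b s0 s) eqn:E.
      * rewrite (ext_child _ _ _ E). destruct HG as [_ HG]. rewrite HG. field. lra.
      * destruct (ext_b s0 (s ++ [x])) eqn:E'. rewrite (ext_nonext_child _ _ _ E E'). field. lra. ring.
  - apply Tfix_super; auto. lra. intros t Ht. apply HA. unfold s0 in Ht. rewrite prefix_len in Ht. auto.
Qed.

Lemma fixS p q T tau omega N0 : 0 <= p -> q <= 1 -> (1 <= N0)%nat ->
  (forall t, (N0 <= length t)%nat -> ~ Aset p q T t) -> F_C T ->
  real_growth_function tau -> limsup_ge0 T tau omega ->
  exists T' tau', F_C T' /\ supermartingale (stationary_fs p q) T' /\
    real_growth_function tau' /\ limsup_ge0 T' tau' omega.
Proof.
  intros Hp Hq HN HA HF [[qt [Hqr Hqe]] [Hg0 [Hg1 Hg2]]] HL.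
  destruct (fixC p q T omega N0 Hp Hq HN HA HF) as [K [HK [HF' HS']]].
  assert (HKr : 1 <= INR K) by (apply (le_INR 1); auto).
  exists (Tfix (prefix omega N0) (INR K) T), (fun n => tau n / INR K).
  split; auto. split; auto. split; [split; [|split; [|split]]|].
  - exists (fun n m => qt n m / INR K). split.
    + exact (rec_rat_trans (enc_pair enc_nat) (fun dn => qt (fst dn) (snd dn)) (Const 1)
               (fun _ => true) K Hqr (fun d => eval_Const 1 _) HK).
    + intros d n. specialize (Hqe d n).
      replace (tau d / INR K - qt d n / INR K) with ((tau d - qt d n) * / INR K) by (field; lra).
      rewrite Rabs_mult, Rabs_inv, (Rabs_pos_eq (INR K)) by lra.
      assert (0 < / INR K <= 1). { split. apply Rinv_0_lt_compat; lra. rewrite <- Rinv_1. apply Rinv_le_contravar; lra. }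
      pose proof (Rabs_pos (tau d - qt d n)). nra.
  - intros n. apply Rdiv_le_0_compat; auto. lra.
  - intros n. unfold Rdiv. apply Rmult_le_compat_r; auto. left. apply Rinv_0_lt_compat. lra.
  - intros B. destruct (Hg2 (B * INR K)) as [n Hn]. exists n. apply (Rmult_lt_reg_r (INR K)); [lra|].
    field_simplify; lra.
  - intros eps He N1. destruct (HL (eps * INR K) ltac:(nra) (Nat.max N1 N0)) as [n [Hn Hlt]].
    exists n. split. lia. unfold Tfix. rewrite prefix_ext by lia.
    apply (Rmult_lt_reg_r (INR K)); [lra|].
    replace ((T (prefix omega n) / INR K - tau n / INR K) * INR K) with (T (prefix omega n) - tau n) by (field; lra).
    lra.
Qed.

Theorem corollary12 (k : rkind) (p q : R) :
  0 <= p -> p < q -> q <= 1 ->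
  exists phi : situation -> R,
    (forall s, p <= phi s <= q) /\
    (forall omega : nat -> bool,
        random k (precise_fs phi) omega <-> random k (stationary_fs p q) omega).
Proof.
  intros Hp Hpq Hq. exists (phiC p q (Wit k)). split.
  { intros s. apply phi_range. lra. }
  intros omega. destruct k; simpl; split.
  - intros Hr [T [HF [HS HL]]]. apply Hr. exists T. split; [exact HF | split; [apply stat_to_precise; auto; lra | exact HL]].
  - intros Hr [T [HF [HS HL]]]. apply Hr.
    destruct HF as [HT [qf [Hrec HH]]]. apply rec_rat_progs in Hrec as [w Hw].
    assert (HW : Wit RK_ML w T) by (exists qf; split; [exact Hw| exact (proj2 HH)]).
    destruct (core_bound p q RK_ML w T HW HS) as [N0 [HN HA]].
    destruct (fixML p q T omega N0 Hp Hq HN HA (conj HT (ex_intro _ qf (conj (proj2 (rec_rat_progs _ _) (ex_intro _ w Hw)) HH)))) as [K [HK [HF' HS']]].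
    exists (Tfix (prefix omega N0) (INR K) T). split; [exact HF'|split; [exact HS'|]].
    apply limsup_transfer; auto. pose proof (le_INR 1 K HK). simpl in H. lra.
  - intros Hr [T [HF [HS HL]]]. apply Hr. exists T. split; [exact HF | split; [apply stat_to_precise; auto; lra | exact HL]].
  - intros Hr [T [HF [HS HL]]]. apply Hr.
    pose proof HF as HF0.
    destruct HF as [HT [D [HD [[qf [Hrec HH]] HG]]]]. apply rec_rat_progs in Hrec as [w Hw].
    assert (HW : Wit RK_wML w T) by (exists D, qf; split; [exact Hw| split; [exact (proj2 HH)| exact HG]]).
    destruct (core_bound p q RK_wML w T HW HS) as [N0 [HN HA]].
    destruct (fixW p q T omega N0 Hp Hq HN HA HF0 HL) as [HF' [HS' Hpos]].
    eexists. split; [exact HF'|]. split; [exact HS'|]. apply limsup_transfer; auto.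
  - intros Hr [T [HF [HS HL]]]. apply Hr. exists T. split; [exact HF | split; [apply stat_to_precise; auto; lra | exact HL]].
  - intros Hr [T [HF [HS HL]]]. apply Hr.
    pose proof HF as HF0. destruct HF as [_ [_ Hrec]]. apply rec_rat_progs in Hrec as [w Hw].
    assert (HW : Wit RK_C w T) by exact Hw.
    destruct (core_bound p q RK_C w T HW HS) as [N0 [HN HA]].
    destruct (fixC p q T omega N0 Hp Hq HN HA HF0) as [K [HK [HF' HS']]].
    exists (Tfix (prefix omega N0) (INR K) T). split; [exact HF'|split; [exact HS'|]].
    apply limsup_transfer; auto. pose proof (le_INR 1 K HK). simpl in H. lra.
  - intros Hr [T [tau [HF [HS [Htau HL]]]]]. apply Hr. exists T, tau. split; [exact HF | split; [apply stat_to_precise; auto; lra | split; [exact Htau| exact HL]]].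
  - intros Hr [T [tau [HF [HS [Htau HL]]]]]. apply Hr.
    pose proof HF as HF0. destruct HF as [_ [_ Hrec]]. apply rec_rat_progs in Hrec as [w Hw].
    assert (HW : Wit RK_S w T) by exact Hw.
    destruct (core_bound p q RK_S w T HW HS) as [N0 [HN HA]].
    exact (fixS p q T tau omega N0 Hp Hq HN HA HF0 Htau HL).
Qed.
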